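(* Let $m\geq 2$ and $n\geq 2$ be integers, let $T_m$ be a tree of order $m$ and $H_n$ a graph of order $n$. Then $rvc(T_m\diamond H_n)=rvc(T_m)$.
   Context: All graphs are finite, simple, connected and undirected. A rainbow vertex $k$-coloring of $G$ is a map $c:V(G)\to\{1,\dots,k\}$ such that every two vertices are joined by a path whose internal vertices all receive distinct colors; $rvc(G)$ is the least $k$ for which $G$ has one. For graphs $G_m$ (order $m$) and $H_n$ (order $n$) on disjoint vertex sets, the edge corona $G_m\diamond H_n$ is obtained from one copy of $G_m$ and $|E(G_m)|$ vertex-disjoint copies of $H_n$, one per edge of $G_m$, by joining both end vertices of the $j$-th edge of $G_m$ to every vertex of the $j$-th copy of $H_n$. *)

(* Defs.v *)
From mathcomp Require Import all_boot.
Set Implicit Arguments. Unset Strict Implicit. Unset Printing Implicit Defensive.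

Definition simple_graph (V : finType) (e : rel V) : Prop :=
  symmetric e /\ irreflexive e.

Definition connected_graph (V : finType) (e : rel V) : Prop :=
  forall x y : V, connect e x y.

Definition has_cycle (V : finType) (e : rel V) : Prop :=
  exists (x : V) (p : seq V),
    [/\ path e x p, uniq (x :: p), 2 <= size p & e (last x p) x].

Definition is_tree (V : finType) (e : rel V) : Prop :=
  connected_graph e /\ ~ has_cycle e.

Definition edge_of (V : finType) (e : rel V) : pred {set V} :=
  fun A => [exists x, exists y, e x y && (A == [set x; y])].

Definition edgeT (V : finType) (e : rel V) : finType := {A : {set V} | edge_of e A}.

(* Edge corona G ◇ H: vertices of G, plus one copy of H for each edge of G. *)
Definition corona_vertex (V W : finType) (e : rel V) : finType :=
  (V + (edgeT e * W))%type.

Definition corona_rel (V W : finType) (e : rel V) (eH : rel W) :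
  rel (corona_vertex W e) :=
  fun u v =>
    match u, v with
    | inl x, inl y => e x y
    | inl x, inr (f, _) => x \in val f
    | inr (f, _), inl x => x \in val f
    | inr (f, h), inr (f', h') => (f == f') && eH h h'
    end.

(* Its internal vertices are
   behead (belast x p) (all vertices except x and y). *)
Definition rainbow_path (V : finType) (e : rel V) (k : nat) (c : V -> 'I_k)
    (x y : V) (p : seq V) : bool :=
  [&& path e x p, last x p == y, uniq (x :: p)
    & uniq (map c (behead (belast x p)))].

Definition rainbow_vertex_coloring (V : finType) (e : rel V) (k : nat)
    (c : V -> 'I_k) : Prop :=
  forall x y : V, x != y -> exists p : seq V, rainbow_path e c x y p.

Definition has_rvc (V : finType) (e : rel V) (k : nat) : Prop :=
  exists c : V -> 'I_k, rainbow_vertex_coloring e c.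

Definition is_rvc (V : finType) (e : rel V) (k : nat) : Prop :=
  has_rvc e k /\ forall j, has_rvc e j -> k <= j.
Arguments corona_rel {V W} e eH u v.

(* Main.v *)
Require Import Defs.
From mathcomp Require Import all_boot.
Set Implicit Arguments. Unset Strict Implicit. Unset Printing Implicit Defensive.

Section Tree.
Variables (V : finType) (e : rel V).
Hypothesis esym : symmetric e.
Hypothesis eirr : irreflexive e.
Hypothesis econn : connected_graph e.
Hypothesis eacyc : ~ has_cycle e.

Lemma no_chord x p : path e x p -> uniq (x :: p) -> 2 <= size p -> ~~ e (last x p) x.
Proof. move=> pp up sp; apply/negP => ex; apply: eacyc; by exists x, p; split. Qed.

Definition II := [set x | [exists y, exists z, (y != z) && e x y && e x z]].

Lemma inIP x y z : y != z -> e x y -> e x z -> x \in II.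
Proof.
move=> h1 h2 h3; rewrite inE; apply/existsP; exists y; apply/existsP; exists z.
by rewrite h1 h2 h3.
Qed.

Lemma inIE x : x \in II -> exists y z, [/\ y != z, e x y & e x z].
Proof.
rewrite inE => /existsP[y /existsP[z /andP[/andP[h1 h2] h3]]]; by exists y, z.
Qed.

Lemma interior_I x p : path e x p -> uniq (x :: p) -> {subset behead (belast x p) <= II}.
Proof.
elim: p x => [|y p IH] x //= /andP[exy pp] /andP[xn up] z.
case: p IH pp up xn => [|y' p] IH pp up xn //=.
rewrite inE => /orP[/eqP -> | zin].
- move: pp => /= /andP[eyy' _]; apply: (@inIP y x y') => //.
  + by move: xn; rewrite !inE negb_or => /andP[_ /norP[]].
  + by rewrite esym.
- exact: (IH y pp up z zin).
Qed.

Lemma last_rev_belast (z : V) q : last (last z q) (rev (belast z q)) = z.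
Proof.
have h2 : rcons (rev q) z = last z q :: rev (belast z q).
  by rewrite -rev_cons lastI rev_rcons.
by rewrite -(last_cons z) -h2 last_rcons.
Qed.

Lemma path_uniq_eq x p q : path e x p -> path e x q -> uniq (x :: p) -> uniq (x :: q) ->
  last x p = last x q -> p = q.
Proof.
elim: p x q => [|y p IH] x [|z q] //=.
- move=> _ _ _ /andP[xq _] lx; exfalso; move: xq; by rewrite lx mem_last.
- move=> _ _ /andP[xq _] _ lx; exfalso; move: xq; by rewrite -lx mem_last.
move=> /andP[exy pp] /andP[exz pq] /andP[xnp up] /andP[xnq uq] l.
case: (eqVneq y z) => [eyz|nyz].
  by subst z; congr (_ :: _); exact: (IH y).
exfalso.
set W := p ++ rev (belast z q).
have pw : path e y W.
  rewrite /W cat_path pp /= l rev_path.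
  by rewrite (@eq_path _ _ e _ z q) // => a b; rewrite esym.
have lw : last y W = z by rewrite /W last_cat l last_rev_belast.
case: (shortenP pw) lw => s ps us sub ls.
have xns : x \notin y :: s.
  rewrite inE negb_or; apply/andP; split.
    by move: xnp; rewrite inE negb_or => /andP[].
  apply/negP => /sub; rewrite mem_cat => /orP[].
    by move: xnp; rewrite inE negb_or => /andP[_ /negP].
  rewrite mem_rev => /mem_belast; exact/negP.
case: s ps us sub xns ls => [|y' s] ps us sub xns ls.
  by move: nyz; rewrite -ls /= eqxx.
have := @no_chord x [:: y, y' & s].
move: ps us xns ls; rewrite /= => ps us xns ls.
rewrite exy ps xns us ls esym exz.
by move/(_ isT isT isT).
Qed.

Lemma split_facts x L z S1 S2 : x :: L = S1 ++ z :: S2 -> path e x L -> uniq (x :: L) ->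
  [/\ path e z S2, uniq (z :: S2) & last x L = last z S2].
Proof.
move=> E pL uL; move: uL; rewrite E cat_uniq => /and3P[_ _ ->].
case: S1 E => [|a S1] /= [Ex EL]; subst.
  by split.
move: pL; rewrite cat_path last_cat /= => /andP[_ /andP[_ ->]]; by split.
Qed.

Lemma second_last x L w z : path e x L -> uniq (x :: L) -> last x L = w -> e w z ->
  z \in x :: L -> exists S1, x :: L = S1 ++ [:: z; w].
Proof.
move=> pL uL lL ewz zin.
have [S1 [S2 E]] : exists S1 S2, x :: L = S1 ++ z :: S2.
  by case/splitPr: zin => S1 S2; exists S1, S2.
have [pS uS lS] := split_facts E pL uL.
exists S1; rewrite E; congr (_ ++ _ :: _).
case: S2 E pS uS lS => [|w' [|w'' S2]] E pS uS lS.
- by move: ewz; rewrite -lL lS /= eirr.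
- by rewrite -lL lS.
- by have := no_chord pS uS isT; rewrite -lS lL ewz.
Qed.

Lemma find_ab u w : u \in II -> w \in II -> u != w ->
  exists a b L, [/\ path e a L, uniq (a :: L), last a L = b &
                   [/\ u \in L, w \in L, u != b & w != b]].
Proof.
move=> uI wI nuw.
have [p0 pp0 lp0] := connectP (econn u w).
case: (shortenP pp0) lp0 => P pP uP _ lP.
case: P pP uP lP => [|v1 P'] pP uP lP; first by move: nuw; rewrite lP eqxx.
set P := v1 :: P' in pP uP lP.
have [y1 [y2 [ny e1 e2]]] := inIE uI.
set a := if y1 != v1 then y1 else y2.
have eua : e u a by rewrite /a; case: ifP.
have anv : a != v1.
  rewrite /a; case: ifP => // /negbFE /eqP <-; by rewrite eq_sym.
have anL : a \notin u :: P.
  rewrite inE negb_or; apply/andP; split.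
    by apply/negP => /eqP E; move: eua; rewrite E eirr.
  apply/negP => ain.
  have [P1 [P2 E]] : exists P1 P2, P = P1 ++ a :: P2.
    by case/splitPr: ain => P1 P2; exists P1, P2.
  rewrite E in pP uP.
  case: P1 E pP uP => [|b1 P1] E pP uP; first by move: anv; case: E => ->; rewrite eqxx.
  have := @no_chord u (rcons (b1 :: P1) a).
  have -> : path e u (rcons (b1 :: P1) a).
    by move: pP; rewrite cat_path rcons_path /= => /andP[-> /andP[-> _]].
  have -> : uniq (u :: rcons (b1 :: P1) a).
    by move: uP; rewrite -cat_rcons -cat_cons cat_uniq => /andP[].
  by rewrite size_rcons last_rcons esym eua => /(_ isT isT isT).
set L0 := u :: P.
have pL0 : path e a L0 by rewrite /= esym eua.
have uL0 : uniq (a :: L0) by rewrite /= anL.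
have lL0 : last a L0 = w by [].
have [z1 [z2 [nz ez1 ez2]]] := inIE wI.
set b := if z1 \in a :: L0 then z2 else z1.
have ewb : e w b by rewrite /b; case: ifP.
have bnL : b \notin a :: L0.
  rewrite /b; case: ifPn => // z1in; apply/negP => z2in.
  have [S1 E1] := second_last pL0 uL0 lL0 ez1 z1in.
  have [S2 E2] := second_last pL0 uL0 lL0 ez2 z2in.
  have E0 : S1 ++ [:: z1; w] = S2 ++ [:: z2; w] by rewrite -E1 -E2.
  move: (congr1 rev E0); rewrite !rev_cat /= => -[].
  by move=> E3; move: nz; rewrite E3 eqxx.
exists a, b, (rcons L0 b); split; [| | |split].
- by rewrite rcons_path pL0 lL0 ewb.
- by rewrite -rcons_cons rcons_uniq bnL uL0.
- by rewrite last_rcons.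
- by rewrite mem_rcons !inE eqxx orbT.
- by rewrite mem_rcons inE lP mem_last orbT.
- by apply/negP => /eqP E; move: bnL; rewrite -E !inE eqxx orbT.
- apply/negP => /eqP E; move: bnL; by rewrite -E -lL0 mem_last.
Qed.

Lemma interior_mem (x : V) s z : z \in s -> z != last x s -> z \in behead (belast x s).
Proof.
case: s => [|y s] //= zin zn.
move: zin; rewrite lastI mem_rcons inE (negbTE zn) //.
Qed.

Lemma uniq_map_neq (T : eqType) (U : eqType) (f : T -> U) s x y :
  uniq (map f s) -> x \in s -> y \in s -> x != y -> f x != f y.
Proof.
elim: s => //= h s IH /andP[hn us]; rewrite !inE.
move=> /orP[/eqP->|xs] /orP[/eqP->|ys]; rewrite ?eqxx // => nxy.
- apply/negP => /eqP E; move: hn; by rewrite E map_f.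
- apply/negP => /eqP E; move: hn; by rewrite -E map_f.
- exact: IH.
Qed.

Lemma lb_tree j (c : V -> 'I_j) : rainbow_vertex_coloring e c -> {in II &, injective c}.
Proof.
move=> rc u w uI wI cuw; apply/eqP; apply/negP => /negP nuw.
have [a [b [L [pL uL lL [uL' wL' nub nwb]]]]] := find_ab uI wI nuw.
have nab : a != b.
  apply/negP => /eqP E; move: uL; rewrite /= => /andP[/negP H _]; apply: H.
  rewrite E -lL; case: L {pL lL wL'} uL' => //= l L _; exact: mem_last.
have [p /and4P[pp /eqP lp up uc]] := rc a b nab.
have Ep : p = L by apply: (path_uniq_eq pp pL up uL); rewrite lp lL.
subst p.
have h1 : u \in behead (belast a L) by apply: interior_mem => //; rewrite lL.
have h2 : w \in behead (belast a L) by apply: interior_mem => //; rewrite lL.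
have := uniq_map_neq uc h1 h2 nuw.
by rewrite cuw eqxx.
Qed.

Lemma uniq_path_ex x y : exists p, [/\ path e x p, uniq (x :: p) & last x p = y].
Proof.
have [p0 pp0 lp0] := connectP (econn x y).
case: (shortenP pp0) lp0 => P pP uP _ lP; by exists P.
Qed.

Lemma minpath (A B : {set V}) s0 t0 : s0 \in A -> t0 \in B -> exists s Q,
  [/\ s \in A, path e s Q, uniq (s :: Q), last s Q \in B &
     ~~ has (fun v => v \in A) Q && ~~ has (fun v => v \in B) (belast s Q)].
Proof.
move=> s0A t0B.
have [Q0 [pQ0 uQ0 lQ0]] := uniq_path_ex s0 t0.
suff H : forall n s Q, size Q <= n -> s \in A -> path e s Q -> uniq (s :: Q) ->
    last s Q \in B -> exists s Q,
  [/\ s \in A, path e s Q, uniq (s :: Q), last s Q \in B &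
     ~~ has (fun v => v \in A) Q && ~~ has (fun v => v \in B) (belast s Q)].
  by apply: (H (size Q0) s0 Q0) => //; rewrite lQ0.
elim=> [|n IH] s Q.
  case: Q => // _ sA _ _ lB; by exists s, [::].
move=> sQ sA pQ uQ lB.
case hA: (has (fun v => v \in A) Q).
  case/hasP: hA => v vQ vA.
  have [Q1 [Q2 E]] : exists Q1 Q2, Q = Q1 ++ v :: Q2.
    by case/splitPr: vQ => Q1 Q2; exists Q1, Q2.
  have E' : s :: Q = (s :: Q1) ++ v :: Q2 by rewrite E.
  have [pS uS lS] := split_facts E' pQ uQ.
  apply: (IH v Q2) => //; last by rewrite -lS.
  by move: sQ; rewrite E size_cat /= addnS ltnS; apply: leq_trans; apply: leq_addl.
case hB: (has (fun v => v \in B) (belast s Q)).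
  case/hasP: hB => v vQ vB.
  have vnl : v != last s Q.
    apply/negP => /eqP E; move: uQ; rewrite lastI rcons_uniq -E vQ //.
  have vin : v \in s :: Q by apply: mem_belast vQ.
  have [Q1 [Q2 [E lQ1]]] : exists Q1 Q2, Q = Q1 ++ Q2 /\ last s Q1 = v.
    by case/splitPl: vin => Q1 Q2 l; exists Q1, Q2.
  subst Q.
  clear vin; case: Q2 sQ pQ uQ lB hA vQ vnl => [|q Q2] sQ pQ uQ lB hA vQ vnl.
    by move: vnl; rewrite cats0 lQ1 eqxx.
  apply: (IH s Q1) => //.
  - by move: sQ; rewrite size_cat /= addnS ltnS; apply: leq_trans; apply: leq_addr.
  - by move: pQ; rewrite cat_path => /andP[].
  - by move: uQ; rewrite -cat_cons cat_uniq => /andP[].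
  - by rewrite lQ1.
exists s, Q; by rewrite sA pQ uQ lB hA hB.
Qed.

Lemma Q_in_I x Q t' : path e x Q -> uniq (x :: Q) -> e (last x Q) t' -> t' \notin x :: Q ->
  {subset Q <= II}.
Proof.
move=> pQ uQ et tn z zQ; apply: (interior_I (x:=x) (p:=rcons Q t')).
- by rewrite rcons_path pQ et.
- by rewrite -rcons_cons rcons_uniq tn uQ.
- by rewrite belast_rcons.
Qed.

Lemma belast_in_I s' s Q : path e s Q -> uniq (s :: Q) -> e s' s -> s' \notin s :: Q ->
  {subset belast s Q <= II}.
Proof.
move=> pQ uQ es sn z zQ; apply: (interior_I (x:=s') (p:=s :: Q)) => //=.
- by rewrite es pQ.
- by rewrite sn; exact: uQ.
Qed.

Lemma uniq_belast (x : V) p : uniq (x :: p) -> uniq (belast x p).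
Proof. by rewrite lastI rcons_uniq => /andP[]. Qed.

Lemma uniq_int (x : V) p : uniq (x :: p) -> uniq (behead (belast x p)).
Proof. by move/uniq_belast; case: (belast x p) => //= ? ? /andP[]. Qed.

Definition col j' (x : V) : 'I_j'.+1 := inord (index x (enum II)).

Lemma col_inj j' : #|II| <= j'.+1 -> {in II &, injective (col j')}.
Proof.
move=> hj u w uI wI.
have hi : forall x, x \in II -> index x (enum II) < j'.+1.
  by move=> x xI; apply: leq_trans hj; rewrite cardE index_mem mem_enum.
move=> /(congr1 val) /=; rewrite /col !inordK ?hi // => h.
by move: h; apply: (index_inj u); rewrite mem_enum.
Qed.

Lemma key_uniq j' K : #|II| <= j'.+1 -> uniq K -> {subset K <= II} -> uniq (map (col j') K).
Proof.
move=> hj uK sK; rewrite map_inj_in_uniq // => x y /sK xI /sK yI; exact: col_inj.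
Qed.

Lemma ub_tree j' : #|II| <= j'.+1 -> rainbow_vertex_coloring e (col j').
Proof.
move=> hj x y nxy; have [p [pp up lp]] := uniq_path_ex x y.
exists p; rewrite /rainbow_path pp up lp eqxx /=.
apply: key_uniq => //; first exact: uniq_int.
exact: interior_I.
Qed.
End Tree.

Section Corona.
Variables (V W : finType) (e : rel V) (eH : rel W).
Hypothesis esym : symmetric e.
Hypothesis eirr : irreflexive e.
Hypothesis econn : connected_graph e.
Hypothesis eacyc : ~ has_cycle e.

Local Notation cv := (corona_vertex W e).
Local Notation R := (corona_rel e eH).

Lemma edge_adj (f : edgeT e) x y : x \in val f -> y \in val f -> x != y -> e x y.
Proof.
case: f => A /= /existsP[x0 /existsP[y0 /andP[e0 /eqP ->]]].
rewrite !inE => /orP[]/eqP-> /orP[]/eqP->; rewrite ?eqxx // => _.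
by rewrite esym.
Qed.

Lemma edge_other (f : edgeT e) x : x \in val f -> exists y, y \in val f /\ y != x.
Proof.
case: f => A /= /existsP[x0 /existsP[y0 /andP[e0 /eqP ->]]].
have n0 : x0 != y0 by apply/negP => /eqP E; move: e0; rewrite E eirr.
rewrite !inE => /orP[]/eqP->.
- by exists y0; rewrite !inE eqxx orbT eq_sym.
- by exists x0; rewrite !inE eqxx.
Qed.

Lemma edge_nonempty (f : edgeT e) : exists x, x \in val f.
Proof.
case: f => A /= /existsP[x0 /existsP[y0 /andP[e0 /eqP ->]]].
by exists x0; rewrite !inE eqxx.
Qed.

Definition proj_v (v : cv) : option V := if v is inl x then Some x else None.

Lemma proj_path p (v : cv) a : path R v p -> uniq (v :: p) ->
  (match v with inl x => x = a | inr (f, _) => (a \in val f) && (inl a \notin p) end) ->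
  path e a (pmap proj_v p).
Proof.
elim: p v a => [|w p IH] v a //= /andP[Rvw pp] /andP[vn up] hv.
case: w Rvw pp vn up hv => [y|[g h']] Rvw pp vn up hv /=.
- rewrite (IH (inl y) y) // andbT.
  case: v Rvw vn hv => [x|[f h]] /= Rvw vn hv; first by subst.
  case/andP: hv => af; rewrite inE negb_or => /andP[ay _].
  apply: (edge_adj af Rvw); apply/negP => /eqP E; move: ay; by rewrite E eqxx.
- apply: (IH (inr (g, h'))) => //=.
  case: v Rvw vn hv => [x|[f h]] /= Rvw vn hv.
    subst x; rewrite Rvw /=; apply/negP => ain; move: vn; by rewrite inE ain orbT.
  case/andP: Rvw => /eqP Efg _; subst g.
  case/andP: hv => -> /=; rewrite inE negb_or; by case/andP.
Qed.

Lemma proj_last b p (v : cv) a : last v p = inl b -> (forall x, v = inl x -> x = a) ->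
  last a (pmap proj_v p) = b.
Proof.
elim: p v a => [|w p IH] v a /=.
  by move=> E /(_ b E) ->.
case: w => [y|z] /= l _.
  by apply: (IH (inl y) y l) => x [->].
by apply: (IH (inr z) a l).
Qed.

Lemma proj_uniq a p : uniq (inl a :: p : seq cv) -> uniq (a :: pmap proj_v p).
Proof.
move=> u; have := @pmap_uniq _ _ proj_v inl _ (inl a :: p) u.
by apply; case.
Qed.

Lemma proj_mem p u : (u \in pmap proj_v p) = (inl u \in p).
Proof. apply: (@can2_mem_pmap _ _ proj_v inl) => //; by case. Qed.

Lemma lb_cor j (c : cv -> 'I_j) : rainbow_vertex_coloring R c ->
  {in II e &, injective (fun x => c (inl x))}.
Proof.
move=> rc u w uI wI cuw; apply/eqP; apply/negP => /negP nuw.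
have [a [b [L [pL uL lL [uL' wL' nub nwb]]]]] := find_ab esym eirr econn eacyc uI wI nuw.
have nab : a != b.
  apply/negP => /eqP E; move: uL; rewrite /= => /andP[/negP H _]; apply: H.
  rewrite E -lL; case: L {pL lL wL'} uL' => //= l L _; exact: mem_last.
have nab' : (inl a : cv) != inl b by [].
have [p /and4P[pp /eqP lp up uc]] := rc (inl a) (inl b) nab'.
have pp' : path e a (pmap proj_v p) by apply: (proj_path pp up).
have up' := proj_uniq up.
have lp' : last a (pmap proj_v p) = b by apply: (proj_last lp) => x [].
have Ep : pmap proj_v p = L by apply: (path_uniq_eq esym eacyc pp' pL up' uL); rewrite lp' lL.
have uin : (inl u : cv) \in p by rewrite -proj_mem Ep.
have win : (inl w : cv) \in p by rewrite -proj_mem Ep.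
have h1 : (inl u : cv) \in behead (belast (inl a) p).
  by apply: interior_mem => //; rewrite lp.
have h2 : (inl w : cv) \in behead (belast (inl a) p).
  by apply: interior_mem => //; rewrite lp.
have := uniq_map_neq uc h1 h2 nuw.
by rewrite cuw eqxx.
Qed.

Definition col' j' (v : cv) : 'I_j'.+1 :=
  match v with inl x => col e j' x | inr _ => ord0 end.

Definition Att (v : cv) : {set V} :=
  match v with inl x => [set x] | inr (f, _) => val f end.

Lemma Att_ne (v : cv) : exists x, x \in Att v.
Proof. case: v => [x|[f h]] /=; [by exists x; rewrite inE | exact: edge_nonempty]. Qed.

Lemma path_inl x Q : path R (inl x) (map inl Q) = path e x Q.
Proof. by elim: Q x => //= y Q IH x; rewrite IH. Qed.

Lemma map_col_inl j' K : map (col' j') (map inl K) = map (col e j') K.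
Proof. by elim: K => //= ? ? ->. Qed.

Lemma inr_notin z K : (inr z : cv) \notin map inl K.
Proof. by elim: K => //= k K IH; rewrite inE IH orbF. Qed.

Lemma uniq_inl x Q : uniq (x :: Q) -> uniq (inl x :: map inl Q : seq cv).
Proof.
move=> u; rewrite -[inl x :: _]/(map inl (x :: Q)) map_inj_uniq //.
by move=> ? ? [].
Qed.

Lemma ub_cor j' : #|II e| <= j'.+1 -> rainbow_vertex_coloring R (col' j').
Proof.
move=> hj u v nuv.
have [a0 a0A] := Att_ne u; have [b0 b0B] := Att_ne v.
have [s [Q [sA pQ uQ lB /andP[nA nB]]]] := minpath econn a0A b0B.
have key := key_uniq hj.
have tout : forall t', t' \in Att v -> t' != last s Q -> t' \notin s :: Q.
  move=> t' tB tn; rewrite lastI mem_rcons inE (negbTE tn) /=.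
  by apply/negP => tin; move: (hasPn nB t' tin); rewrite tB.
have sout : forall s', s' \in Att u -> s' != s -> s' \notin s :: Q.
  move=> s' sA' sn; rewrite inE (negbTE sn) /=.
  by apply/negP => sin; move: (hasPn nA s' sin); rewrite sA'.
case: u nuv a0A sA nA sout => [x|[f h]] nuv _ sA nA sout;
case: v nuv b0B lB nB tout => [y|[g h']] nuv _ lB nB tout.
-
  move: sA lB; rewrite /= !inE => /eqP Es /eqP El; subst s.
  exists (map inl Q); apply/and4P; split.
  + by rewrite path_inl.
  + by rewrite (last_map inl) El.
  + exact: uniq_inl.
  + rewrite (belast_map inl) behead_map map_col_inl.
    apply: key; [exact: uniq_int | exact: interior_I].
-
  move: sA; rewrite /= inE => /eqP Es; subst s.
  have [t' [t'g nt']] := edge_other lB.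
  exists (rcons (map inl Q) (inr (g, h'))); apply/and4P; split.
  + by rewrite rcons_path path_inl pQ (last_map inl) /=.
  + by rewrite last_rcons.
  + by rewrite -rcons_cons rcons_uniq inr_notin /=; exact: uniq_inl.
  + rewrite belast_rcons /= map_col_inl.
    apply: key; first by case/andP: uQ.
    apply: (Q_in_I esym (x:=x) (t':=t')) => //.
    * by apply: (edge_adj lB t'g); rewrite eq_sym.
    * exact: tout.
-
  move: lB; rewrite /= inE => /eqP El.
  have [s' [s'f ns']] := edge_other sA.
  exists (inl s :: map inl Q); apply/and4P; split.
  + by rewrite /= sA path_inl.
  + by rewrite /= (last_map inl) El.
  + rewrite /= inE /= inr_notin /=; exact: uniq_inl.
  + rewrite /= (belast_map inl) map_col_inl.
    apply: key; first exact: uniq_belast.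
    apply: (belast_in_I esym (s':=s')) => //.
    * exact: (edge_adj s'f sA ns').
    * exact: sout.
-
  have [s' [s'f ns']] := edge_other sA.
  have [t' [t'g nt']] := edge_other lB.
  exists (inl s :: rcons (map inl Q) (inr (g, h'))); apply/and4P; split.
  + by rewrite /= sA rcons_path path_inl pQ (last_map inl) /=.
  + by rewrite /= last_rcons.
  + have U : uniq (inl s :: rcons (map inl Q) (inr (g, h')) : seq cv).
      by rewrite -rcons_cons rcons_uniq inr_notin /=; exact: uniq_inl.
    rewrite cons_uniq U andbT inE negb_or /= mem_rcons inE (negbTE nuv) /=.
    exact: inr_notin.
  + rewrite /= belast_rcons -[inl s :: _]/(map inl (s :: Q)) map_col_inl.
    case: Q pQ uQ lB nA nB tout sout nt' => [|q Q] pQ uQ lB nA nB tout sout nt'.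
      by [].
    apply: key => // z; rewrite inE => /orP[/eqP ->|zQ].
    * apply: (belast_in_I esym (s':=s') (s:=s) (Q:=q :: Q)) => //.
      - exact: (edge_adj s'f sA ns').
      - exact: sout.
      - by rewrite /= inE eqxx.
    * apply: (Q_in_I esym (x:=s) (Q:=q :: Q) (t':=t')) => //.
      - by apply: (edge_adj lB t'g); rewrite eq_sym.
      - exact: tout.
Qed.
End Corona.

Lemma tree_char (V : finType) (e : rel V) (x0 : V) : symmetric e -> irreflexive e ->
  connected_graph e -> ~ has_cycle e ->
  forall j, has_rvc e j <-> (0 < j /\ #|II e| <= j).
Proof.
move=> es ei ec ea j; split.
  case=> c rc; split; first by apply: leq_ltn_trans (leq0n _) (ltn_ord (c x0)).
  by have := @leq_card_in _ _ c _ (lb_tree es ei ec ea rc); rewrite card_ord.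
case: j => [[//]|j'] [_ hj]; exists (col e j'); exact: ub_tree.
Qed.

Lemma cor_char (V W : finType) (e : rel V) (eH : rel W) (x0 : V) : symmetric e -> irreflexive e ->
  connected_graph e -> ~ has_cycle e ->
  forall j, has_rvc (corona_rel e eH) j <-> (0 < j /\ #|II e| <= j).
Proof.
move=> es ei ec ea j; split.
  case=> c rc; split; first by apply: leq_ltn_trans (leq0n _) (ltn_ord (c (inl x0))).
  by have := @leq_card_in _ _ (fun x => c (inl x)) _ (lb_cor es ei ec ea rc); rewrite card_ord.
case: j => [[//]|j'] [_ hj]; exists (@col' V W e j'); exact: ub_cor.
Qed.

Theorem theorem4 (m n : nat) (V W : finType) (eT : rel V) (eH : rel W) :
  2 <= m -> 2 <= n ->
  #|V| = m -> #|W| = n ->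
  simple_graph eT -> is_tree eT ->
  simple_graph eH -> connected_graph eH ->
  forall k : nat, is_rvc eT k <-> is_rvc (corona_rel eT eH) k.
Proof.
move=> hm _ cV _ [es ei] [ec ea] _ _ k.
have [x0 _] : exists x : V, x \in predT.
  apply/card_gt0P; rewrite cV; exact: leq_trans hm.
have H : forall j, has_rvc eT j <-> has_rvc (corona_rel eT eH) j.
  move=> j; have h1 := tree_char x0 es ei ec ea j.
  have h2 := cor_char eH x0 es ei ec ea j; tauto.
rewrite /is_rvc; split => -[h1 h2]; split.
- by apply/H.
- by move=> j /H; apply: h2.
- by apply/H.
- by move=> j /H; apply: h2.
Qed.
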